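(* Let $K^2$ be the Klein bottle and $\mathcal X(K^2)=\mathrm{Hom}(\pi_1(K^2),\mathrm{SL}_2(\mathbb C))/\!/\mathrm{SL}_2(\mathbb C)$ its $\mathrm{SL}_2(\mathbb C)$-character variety. Then $\mathcal X(K^2)$ has three irreducible components. Exactly one of them contains characters of irreducible representations, and this component has dimension 1. *)

(* Defs.v *)
From HB Require Import structures.
From mathcomp Require Import all_boot all_order all_algebra.
From mathcomp Require Import Rstruct complex.
From mathcomp Require Import mpoly.
Set Implicit Arguments. Unset Strict Implicit. Unset Printing Implicit Defensive.
Import Order.TTheory GRing.Theory Num.Theory.
Local Open Scope ring_scope.

Definition C : Type := complex Rdefinitions.R.
HB.instance Definition _ := GRing.Field.on C.

Definition pt := 'I_3 -> C.
Definition cset := pt -> Prop.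
Definition csubset (S T : cset) : Prop := forall x, S x -> T x.
Definition csame (S T : cset) : Prop := csubset S T /\ csubset T S.

Definition zero_locus (P : {mpoly C[3]} -> Prop) : cset :=
  fun x => forall p, P p -> p.@[x] = 0.
Definition zclosed (S : cset) : Prop := exists P, csame S (zero_locus P).

Definition zirreducible (S : cset) : Prop :=
  [/\ zclosed S, exists x, S x &
      forall S1 S2, zclosed S1 -> zclosed S2 ->
        csubset S (fun x => S1 x \/ S2 x) -> csubset S S1 \/ csubset S S2].

Definition irr_component (X Z : cset) : Prop :=
  [/\ zirreducible Z, csubset Z X &
      forall W, zirreducible W -> csubset Z W -> csubset W X -> csubset W Z].

Definition irr_chain (Z : cset) (f : nat -> cset) (n : nat) : Prop :=
  (forall i, (i <= n)%N -> zirreducible (f i) /\ csubset (f i) Z) /\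
  (forall i, (i < n)%N -> csubset (f i) (f i.+1) /\ ~ csubset (f i.+1) (f i)).

Definition zdim_eq (Z : cset) (n : nat) : Prop :=
  (exists f, irr_chain Z f n) /\ ~ (exists f, irr_chain Z f n.+1).

(** SL_2(C) and representations of pi_1(K^2) = < a, b | a b a^-1 b = 1 >,
    given by the images (A, B) of the generators. *)
Definition SL2 (A : 'M[C]_2) : Prop := \det A = 1.
Definition klein_rep (A B : 'M[C]_2) : Prop :=
  [/\ SL2 A, SL2 B & A *m B *m invmx A *m B = 1%:M].

Definition irreducible_rep (A B : 'M[C]_2) : Prop :=
  ~ exists v : 'cV[C]_2, v != 0 /\
      exists l m : C, A *m v = l *: v /\ B *m v = m *: v.

(** The character of (A,B), in the trace coordinates
    (tr rho(a), tr rho(b), tr rho(ab)) of the character variety of the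
    free group F_2 = C^3. *)
Definition char_pt (A B : 'M[C]_2) : pt :=
  fun i => match val i with
           | 0 => \tr A
           | 1 => \tr B
           | _ => \tr (A *m B)
           end.

(** The SL_2(C)-character variety of the Klein bottle, as the (closed)
    image of Hom(pi_1(K^2), SL_2(C)) in C^3. *)
Definition XK : cset :=
  fun x => exists A B, klein_rep A B /\ forall i, x i = char_pt A B i.

Definition contains_irr_char (Z : cset) : Prop :=
  exists A B, [/\ klein_rep A B, irreducible_rep A B & Z (char_pt A B)].

(* Main.v *)
Require Import Defs.
From HB Require Import structures.
From mathcomp Require Import all_boot all_order all_algebra.
From mathcomp Require Import Rstruct complex.
From mathcomp Require Import mpoly.
From mathcomp Require Import ring.
From Stdlib Require Import Classical FunctionalExtensionality.
Set Implicit Arguments. Unset Strict Implicit. Unset Printing Implicit Defensive.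
Import Order.TTheory GRing.Theory Num.Theory.
Local Open Scope ring_scope.

Lemma natC_inj (m n : nat) : (m%:R : C) = n%:R -> m = n.
Proof. move=> h. have : (m%:R : complex Rdefinitions.R) = n%:R by exact h.
by move/eqP; rewrite eqr_nat => /eqP. Qed.
Lemma two_neq0 : (2 : C) != 0.
Proof. by apply/eqP => /(@natC_inj 2%N 0%N). Qed.
Lemma four_neq0 : (4 : C) != 0.
Proof. by apply/eqP => /(@natC_inj 4%N 0%N). Qed.
Lemma one_neq0 : (1 : C) != 0.
Proof. exact: oner_neq0. Qed.
Definition iC : C := 'i.
Lemma iCsq : iC * iC = -1.
Proof. exact: (@sqr_i _ ). Qed.
Lemma iC_neq0 : iC != 0.
Proof. apply/eqP => h; have := iCsq; rewrite h mul0r => /eqP; rewrite eq_sym oppr_eq0.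
by rewrite (negbTE one_neq0). Qed.

Lemma ow0 : (widen_ord (leqnSn 1) ord_max : 'I_2) = 0. Proof. exact: val_inj. Qed.
Lemma om1 : (ord_max : 'I_2) = 1. Proof. exact: val_inj. Qed.
Lemma ol00 : (lift 0 0 : 'I_2) = 1. Proof. exact: val_inj. Qed.
Lemma ol10 : (lift 1 0 : 'I_2) = 0. Proof. exact: val_inj. Qed.
Lemma ord2 (i : 'I_2) : i = 0 \/ i = 1.
Proof. case: i => [[|[|//]] ?]; [left|right]; exact: val_inj. Qed.
Ltac fixo := rewrite ?ow0 ?om1 ?ol00 ?ol10.
Lemma ordP2 (P : 'I_2 -> Prop) : P 0 -> P 1 -> forall i, P i.
Proof. by move=> h0 h1 i; case: (ord2 i) => ->. Qed.
Ltac mx2 := apply/matrixP; apply: ordP2; apply: ordP2.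

Lemma det2 (A : 'M[C]_2) : \det A = A 0 0 * A 1 1 - A 0 1 * A 1 0.
Proof.
rewrite (expand_det_row _ 0) !big_ord_recr big_ord0 /= /cofactor !det_mx11 !mxE /=.
fixo; rewrite !expr0 !expr1; ring.
Qed.
Lemma tr2 (A : 'M[C]_2) : \tr A = A 0 0 + A 1 1.
Proof. by rewrite /mxtrace !big_ord_recr big_ord0 /= add0r; fixo. Qed.
Lemma mul2E m (A : 'M[C]_2) (B : 'M[C]_(2, m)) i j :
  (A *m B) i j = A i 0 * B 0 j + A i 1 * B 1 j.
Proof. by rewrite !mxE !big_ord_recr big_ord0 /= add0r; fixo. Qed.
Lemma CH2 (B : 'M[C]_2) : B *m B = \tr B *: B - \det B *: 1%:M.
Proof. rewrite det2 tr2; mx2; rewrite mul2E !mxE /=; ring. Qed.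

Definition mk2 (a b c d : C) : 'M[C]_2 :=
  \matrix_(i < 2, j < 2) if i == 0 then (if j == 0 then a else b)
                         else (if j == 0 then c else d).
Lemma mk2E a b c d : [/\ mk2 a b c d 0 0 = a, mk2 a b c d 0 1 = b,
  mk2 a b c d 1 0 = c & mk2 a b c d 1 1 = d].
Proof. by rewrite !mxE. Qed.

Lemma klein_iff A B : SL2 A ->
  (A *m B *m invmx A *m B = 1%:M <-> B *m A *m B = A).
Proof.
move=> hA; have uA : A \in unitmx by rewrite unitmxE hA unitr1.
split => h.
- have h1 := mulmx1C h.
  rewrite !mulmxA in h1.
  by rewrite -[RHS]mul1mx -h1 -!mulmxA mulVmx // mulmx1.
- apply: mulmx1C.
  by rewrite !mulmxA h mulmxV.
Qed.

Lemma eigvec (A : 'M[C]_2) : exists l : C, exists v : 'cV[C]_2, v != 0 /\ A *m v = l *: v.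
Proof.
have [l hl] : exists l : C, root (char_poly A^T) l.
  apply/(@closed_rootP (complex Rdefinitions.R)).
  by rewrite size_char_poly.
have : eigenvalue A^T l by rewrite eigenvalue_root_char.
case/eigenvalueP => u hu nz.
exists l, u^T; split; first by rewrite trmx_eq0.
by rewrite -[A]trmxK -trmx_mul hu linearZ.
Qed.

Lemma BB_eq (B : 'M[C]_2) : SL2 B -> B *m B = \tr B *: B - 1%:M.
Proof. by move=> hB; rewrite CH2 hB scale1r. Qed.

Lemma trB (X Y : 'M[C]_2) : \tr (X - Y) = \tr X - \tr Y.
Proof. exact: raddfB. Qed.

Lemma trace_rel A B : klein_rep A B ->
  2 * \tr (A *m B) = \tr A * \tr B /\ \tr B * \tr (A *m B) = 2 * \tr A.
Proof.
case=> hA hB hK; have h := (klein_iff B hA).1 hK.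
have hBB := BB_eq hB.
split.
- have e : B *m (B *m A *m B) = B *m A by rewrite h.
  rewrite !mulmxA hBB -mulmxA mulmxBl mul1mx -scalemxAl mulmxA h in e.
  have := congr1 mxtrace e; rewrite trB mxtraceZ [in RHS]mxtrace_mulC.
  move=> e2; have -> : 2 * \tr (A *m B) = \tr (A *m B) + \tr (A *m B) by ring.
  rewrite -{1}e2; ring.
- have e : \tr (B *m A *m B) = \tr A by rewrite h.
  rewrite mxtrace_mulC mulmxA hBB mulmxBl mul1mx -scalemxAl trB mxtraceZ in e.
  rewrite [\tr (B *m A)]mxtrace_mulC in e.
  have -> : 2 * \tr A = \tr A + \tr A by ring.
  rewrite -{1}e; ring.
Qed.

Lemma reducible_tr A B (mu : C) : klein_rep A B -> \tr B = 2 * mu -> mu * mu = 1 ->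
  ~ irreducible_rep A B.
Proof.
case=> hA hB hK htr hmu; have h := (klein_iff B hA).1 hK.
have hBB := BB_eq hB.
set N := B - mu%:M.
have hNN : N *m N = 0.
  rewrite /N mulmxBl !mulmxBr hBB htr mul_mx_scalar mul_scalar_mx -scalar_mxM.
  rewrite hmu.
  apply/matrixP => i j; rewrite !mxE; ring.
set M := (2 * mu)%:M - B.
have hMB : M *m B = 1%:M.
  rewrite /M mulmxBl hBB htr mul_scalar_mx opprB addrCA subrr addr0 //.
have hAB : A *m B = M *m A.
  by rewrite -[LHS]mul1mx -hMB -!mulmxA [B *m (A *m B)]mulmxA h.
have hAN : A *m N = - (N *m A).
  rewrite /N mulmxBr hAB /M mulmxBl mul_mx_scalar mul_scalar_mx mulmxBl mul_scalar_mx.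
  apply/matrixP => i j; rewrite !mxE; ring.
move=> hirr; apply: hirr.
have [l [w [nzw hw]]] := eigvec A.
have hBN : B = N + mu%:M by rewrite /N subrK.
case: (boolP (N *m w == 0)) => hNw.
- exists w; split => //; exists l, mu; split => //.
  by rewrite hBN mulmxDl (eqP hNw) add0r mul_scalar_mx.
- exists (N *m w); split => //; exists (- l), mu; split.
  + by rewrite mulmxA hAN mulNmx -mulmxA hw -scalemxAr scaleNr.
  + by rewrite hBN mulmxDl mulmxA hNN mul0mx add0r mul_scalar_mx.
Qed.

Definition phi (u w : pt) (t : C) : pt := fun i => u i + t * w i.

Lemma restr (u w : pt) (p : {mpoly C[3]}) :
  exists q : {poly C}, forall t, p.@[phi u w t] = q.[t].
Proof.
elim/mpolyind: p => [|c m p _ _ [q hq]].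
  by exists 0 => t; rewrite meval0 horner0.
exists (c *: \prod_(i < 3) ((u i)%:P + (w i) *: 'X) ^+ (m i) + q) => t.
rewrite mevalD mevalZ mevalX hq hornerD hornerZ horner_prod; congr (_ * _ + _).
apply: eq_bigr => i _; rewrite horner_exp hornerD hornerC hornerZ hornerX /phi.
by rewrite mulrC.
Qed.

Lemma univ (q : {poly C}) : exists G : {mpoly C[3]}, forall x : pt, G.@[x] = q.[x 1].
Proof.
elim/poly_ind: q => [|q c [G hG]].
  by exists 0 => x; rewrite meval0 horner0.
exists (G * 'X_1 + c%:MP) => x.
by rewrite mevalD mevalM mevalXU mevalC hG hornerMXaddC.
Qed.

Lemma nonroot (q : {poly C}) : q != 0 -> exists t, q.[t] != 0.
Proof.
move=> nq; apply: NNPP => hn.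
have hall : forall t, q.[t] = 0.
  by move=> t; apply: NNPP => ht; apply: hn; exists t; apply/eqP.
set s := [seq (i%:R : C) | i <- iota 0 (size q)].
have h1 : all (root q) s.
  by apply/allP => x /mapP [i _ ->]; apply/rootP; apply: hall.
have h2 : uniq s.
  rewrite map_inj_uniq ?iota_uniq //; exact: natC_inj.
by have := max_poly_roots nq h1 h2; rewrite size_map size_iota ltnn.
Qed.

Lemma zl_not (P : {mpoly C[3]} -> Prop) x : ~ zero_locus P x ->
  exists p, P p /\ p.@[x] != 0.
Proof.
move=> h; apply: NNPP => hn; apply: h => p hp; apply: NNPP => hp2.
by apply: hn; exists p; split => //; apply/eqP.
Qed.

Lemma zclosed_union S1 S2 : zclosed S1 -> zclosed S2 ->
  zclosed (fun x => S1 x \/ S2 x).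
Proof.
move=> [P1 [h11 h12]] [P2 [h21 h22]].
exists (fun r => exists p q, [/\ P1 p, P2 q & r = p * q]); split.
- move=> x [/h11 hx|/h21 hx] r [p [q [hp hq ->]]]; rewrite mevalM.
  + by rewrite hx // mul0r.
  + by rewrite (hx q) // mulr0.
- move=> x hx; case: (classic (zero_locus P1 x)) => h1; first by left; apply: h12.
  right; apply: h22 => q hq.
  have [p [hp nz]] := zl_not h1.
  have := hx (p * q) (ex_intro _ p (ex_intro _ q (And3 hp hq erefl))).
  by rewrite mevalM => /eqP; rewrite mulf_eq0 (negbTE nz) => /eqP.
Qed.

Lemma line_irr (u w : pt) (L : cset) : zclosed L ->
  (forall x, L x <-> exists t, x = phi u w t) -> zirreducible L.
Proof.
move=> hc hL; split => //; first by exists (phi u w 0); apply/hL; exists 0.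
move=> S1 S2 [P1 [h11 h12]] [P2 [h21 h22]] hsub.
apply: NNPP => hn.
have hn1 : ~ csubset L S1 by move=> h; apply: hn; left.
have hn2 : ~ csubset L S2 by move=> h; apply: hn; right.
have [x1 [Lx1 nx1]] : exists x, L x /\ ~ S1 x.
  by apply: NNPP => hh; apply: hn1 => x Lx; apply: NNPP => nx; apply: hh; exists x.
have [x2 [Lx2 nx2]] : exists x, L x /\ ~ S2 x.
  by apply: NNPP => hh; apply: hn2 => x Lx; apply: NNPP => nx; apply: hh; exists x.
have [p1 [hp1 nz1]] : exists p, P1 p /\ p.@[x1] != 0.
  by apply: zl_not => h; apply: nx1; apply: h12.
have [p2 [hp2 nz2]] : exists p, P2 p /\ p.@[x2] != 0.
  by apply: zl_not => h; apply: nx2; apply: h22.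
have [q1 hq1] := restr u w p1.
have [q2 hq2] := restr u w p2.
have [t1 et1] := (hL x1).1 Lx1.
have [t2 et2] := (hL x2).1 Lx2.
have nq1 : q1 != 0 by apply/eqP => e; move: nz1; rewrite et1 hq1 e horner0 eqxx.
have nq2 : q2 != 0 by apply/eqP => e; move: nz2; rewrite et2 hq2 e horner0 eqxx.
have [t ht] := nonroot (mulf_neq0 nq1 nq2).
have Lt : L (phi u w t) by apply/hL; exists t.
move: ht; rewrite hornerM mulf_eq0 negb_or -hq1 -hq2.
case: (hsub _ Lt) => [/h11 h|/h21 h].
- by rewrite (h p1 hp1) eqxx.
- by rewrite (h p2 hp2) eqxx andbF.
Qed.

Definition pointset (a : pt) : cset := fun x => x = a.

Lemma point_closed a : zclosed (pointset a).
Proof.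
exists (fun p => exists i, p = 'X_i - (a i)%:MP); split.
- move=> x -> p [i ->]; by rewrite mevalB mevalXU mevalC subrr.
- move=> x hx; apply: functional_extensionality => i.
  have := hx _ (ex_intro _ i erefl); rewrite mevalB mevalXU mevalC.
  by move/eqP; rewrite subr_eq0 => /eqP.
Qed.

Lemma point_irr a : zirreducible (pointset a).
Proof.
split; first exact: point_closed; first by exists a.
move=> S1 S2 _ _ h; case: (h a erefl) => ha; [left|right]; by move=> x ->.
Qed.

Lemma m00 a b c d : mk2 a b c d 0 0 = a. Proof. by rewrite mxE. Qed.
Lemma m01 a b c d : mk2 a b c d 0 1 = b. Proof. by rewrite mxE. Qed.
Lemma m10 a b c d : mk2 a b c d 1 0 = c. Proof. by rewrite mxE. Qed.
Lemma m11 a b c d : mk2 a b c d 1 1 = d. Proof. by rewrite mxE. Qed.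
Ltac mkE := rewrite ?m00 ?m01 ?m10 ?m11.

Lemma ord3 (i : 'I_3) : [\/ i = 0, i = 1 | i = 2].
Proof. case: i => [[|[|[|//]]] ?]; [constructor 1|constructor 2|constructor 3]; exact: val_inj. Qed.

Lemma pt_ext (x y : pt) : x 0 = y 0 -> x 1 = y 1 -> x 2 = y 2 -> x = y.
Proof. move=> h0 h1 h2; apply: functional_extensionality => i; by case: (ord3 i) => ->. Qed.

Definition mkpt (a b c : C) : pt := fun i => match val i with 0 => a | 1 => b | _ => c end.
Lemma mkpt0 a b c : mkpt a b c 0 = a. Proof. by []. Qed.
Lemma mkpt1 a b c : mkpt a b c 1 = b. Proof. by []. Qed.
Lemma mkpt2 a b c : mkpt a b c 2 = c. Proof. by []. Qed.
Lemma cp0 A B : char_pt A B 0 = \tr A. Proof. by []. Qed.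
Lemma cp1 A B : char_pt A B 1 = \tr B. Proof. by []. Qed.
Lemma cp2 A B : char_pt A B 2 = \tr (A *m B). Proof. by []. Qed.

Lemma zl2 p1 p2 x : zero_locus (fun p => p = p1 \/ p = p2) x <-> p1.@[x] = 0 /\ p2.@[x] = 0.
Proof.
split.
- by move=> h; split; apply: h; [left|right].
- by case=> h1 h2 p [->|->].
Qed.

Definition Z1 : cset := zero_locus (fun p => p = 'X_0 \/ p = 'X_2).
Definition Z2 : cset := zero_locus (fun p => p = 'X_1 - 2%:MP \/ p = 'X_2 - 'X_0).
Definition Z3 : cset := zero_locus (fun p => p = 'X_1 + 2%:MP \/ p = 'X_2 + 'X_0).

Lemma Z1E x : Z1 x <-> x 0 = 0 /\ x 2 = 0.
Proof. by rewrite /Z1 zl2 !mevalXU. Qed.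
Lemma Z2E x : Z2 x <-> x 1 = 2 /\ x 2 = x 0.
Proof.
rewrite /Z2 zl2 !mevalB !mevalXU mevalC.
by split; case=> /eqP h1 /eqP h2; split; apply/eqP; rewrite ?subr_eq0 in h1 h2 *.
Qed.
Lemma Z3E x : Z3 x <-> x 1 = -2 /\ x 2 = - x 0.
Proof.
rewrite /Z3 zl2 !mevalD !mevalXU mevalC.
by split; case=> /eqP h1 /eqP h2; split; apply/eqP; rewrite ?addr_eq0 in h1 h2 *.
Qed.

Lemma XK_sub x : XK x -> [\/ Z1 x, Z2 x | Z3 x].
Proof.
case=> A [B [hk hx]].
have [h1 h2] := trace_rel hk.
have e : \tr A * ((\tr B - 2) * (\tr B + 2)) = 0.
  transitivity (\tr B * (2 * \tr (A *m B)) - 2 * (\tr B * \tr (A *m B))); last by ring.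
  rewrite h1 h2; ring.
have ex0 := hx 0; have ex1 := hx 1; have ex2 := hx 2.
rewrite cp0 in ex0; rewrite cp1 in ex1; rewrite cp2 in ex2.
move/eqP: e; rewrite !mulf_eq0 subr_eq0 addr_eq0 => /orP [/eqP ha|/orP [/eqP hb|/eqP hb]].
- constructor 1; apply/Z1E; rewrite ex0 ex2; split => //.
  move: h1; rewrite ha mul0r => /eqP; rewrite mulf_eq0 (negbTE two_neq0) /=.
  by move/eqP.
- constructor 2; apply/Z2E; rewrite ex0 ex1 ex2; split => //.
  apply: (mulfI two_neq0); rewrite h1 hb; ring.
- constructor 3; apply/Z3E; rewrite ex0 ex1 ex2; split => //.
  apply: (mulfI two_neq0); rewrite h1 hb; ring.
Qed.

Lemma klein_mk A B : SL2 A -> SL2 B -> B *m A *m B = A -> klein_rep A B.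
Proof. by move=> hA hB h; split => //; apply/(klein_iff B hA). Qed.

Lemma XK_mk A B x : klein_rep A B -> x 0 = \tr A -> x 1 = \tr B -> x 2 = \tr (A *m B) -> XK x.
Proof.
move=> hk h0 h1 h2; exists A, B; split => // i.
by case: (ord3 i) => ->; [rewrite cp0|rewrite cp1|rewrite cp2].
Qed.

Lemma Z1_XK x : Z1 x -> XK x.
Proof.
move/Z1E => [h0 h2].
apply: (@XK_mk (mk2 iC 0 (iC * x 1) (- iC)) (mk2 (x 1) (-1) 1 0)).
- apply: klein_mk.
  + rewrite /SL2 det2; mkE.
    have -> : (1 : C) = - (iC * iC) by rewrite iCsq opprK.
    ring.
  + rewrite /SL2 det2; mkE; ring.
  + mx2; rewrite !mul2E; mkE; ring.
- by rewrite h0 tr2; mkE; rewrite subrr.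
- by rewrite tr2; mkE; rewrite addr0.
- by rewrite h2 tr2 !mul2E; mkE; ring.
Qed.

Lemma Z2_XK x : Z2 x -> XK x.
Proof.
move/Z2E => [h1 h2]; 
apply: (@XK_mk (mk2 (x 0) (-1) 1 0) (mk2 1 0 0 1)).
- apply: klein_mk.
  + rewrite /SL2 det2; mkE; ring.
  + rewrite /SL2 det2; mkE; ring.
  + mx2; rewrite !mul2E; mkE; ring.
- by rewrite tr2; mkE; ring.
- by rewrite h1 tr2; mkE.
- by rewrite h2 tr2 !mul2E; mkE; ring.
Qed.

Lemma Z3_XK x : Z3 x -> XK x.
Proof.
move/Z3E => [h1 h2]; 
apply: (@XK_mk (mk2 (x 0) (-1) 1 0) (mk2 (-1) 0 0 (-1))).
- apply: klein_mk.
  + rewrite /SL2 det2; mkE; ring.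
  + rewrite /SL2 det2; mkE; ring.
  + mx2; rewrite !mul2E; mkE; ring.
- by rewrite tr2; mkE; ring.
- by rewrite h1 tr2; mkE; ring.
- by rewrite h2 tr2 !mul2E; mkE; ring.
Qed.

Lemma Z1_param x : Z1 x <-> exists t, x = phi (mkpt 0 0 0) (mkpt 0 1 0) t.
Proof.
rewrite Z1E; split.
- case=> h0 h2; exists (x 1); apply: pt_ext; rewrite /phi ?h0 ?h2 ?mkpt0 ?mkpt1 ?mkpt2; ring.
- by case=> t ->; rewrite /phi ?mkpt0 ?mkpt1 ?mkpt2; split; ring.
Qed.
Lemma Z2_param x : Z2 x <-> exists t, x = phi (mkpt 0 2 0) (mkpt 1 0 1) t.
Proof.
rewrite Z2E; split.
- case=> h1 h2; exists (x 0); apply: pt_ext; rewrite /phi ?h1 ?h2 ?mkpt0 ?mkpt1 ?mkpt2; ring.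
- by case=> t ->; rewrite /phi ?mkpt0 ?mkpt1 ?mkpt2; split; ring.
Qed.
Lemma Z3_param x : Z3 x <-> exists t, x = phi (mkpt 0 (-2) 0) (mkpt 1 0 (-1)) t.
Proof.
rewrite Z3E; split.
- case=> h1 h2; exists (x 0); apply: pt_ext; rewrite /phi ?h1 ?h2 ?mkpt0 ?mkpt1 ?mkpt2; ring.
- by case=> t ->; rewrite /phi ?mkpt0 ?mkpt1 ?mkpt2; split; ring.
Qed.

Lemma zl_closed P : zclosed (zero_locus P).
Proof. by exists P; split. Qed.

Lemma Z1_irr : zirreducible Z1.
Proof. exact: (line_irr (zl_closed _) Z1_param). Qed.
Lemma Z2_irr : zirreducible Z2.
Proof. exact: (line_irr (zl_closed _) Z2_param). Qed.
Lemma Z3_irr : zirreducible Z3.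
Proof. exact: (line_irr (zl_closed _) Z3_param). Qed.

Lemma irr3 W : zirreducible W -> csubset W (fun x => [\/ Z1 x, Z2 x | Z3 x]) ->
  [\/ csubset W Z1, csubset W Z2 | csubset W Z3].
Proof.
move=> hW hs; have [_ _ hirr] := hW.
have c23 := zclosed_union (zl_closed (fun p => p = 'X_1 - 2%:MP \/ p = 'X_2 - 'X_0))
                          (zl_closed (fun p => p = 'X_1 + 2%:MP \/ p = 'X_2 + 'X_0)).
have := hirr Z1 _ (zl_closed _) c23.
case.
- by move=> x /hs [h|h|h]; [left|right; left|right; right].
- by move=> h; constructor 1.
- move=> h23.
  have [_ _ hirr2] := hW.
  case: (hirr2 Z2 Z3 (zl_closed _) (zl_closed _) h23) => h; [constructor 2|constructor 3]; exact: h.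
Qed.

Lemma two_neq_m2 : (2 : C) <> -2.
Proof.
move=> h; have e : (4 : C) = 2 - (-2) by ring.
by move: e; rewrite -h subrr => /eqP; rewrite (negbTE four_neq0).
Qed.

Lemma in1 : Z1 (mkpt 0 0 0). Proof. by apply/Z1E. Qed.
Lemma in2 : Z2 (mkpt 1 2 1). Proof. by apply/Z2E. Qed.
Lemma in3 : Z3 (mkpt 1 (-2) (-1)). Proof. by apply/Z3E. Qed.

Lemma ns12 : ~ csubset Z1 Z2.
Proof. move=> h; have /Z2E [h1 _] := h _ in1; rewrite mkpt1 in h1.
by move/eqP: h1; rewrite eq_sym (negbTE two_neq0). Qed.
Lemma ns13 : ~ csubset Z1 Z3.
Proof. move=> h; have /Z3E [h1 _] := h _ in1; rewrite mkpt1 in h1.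
by move/eqP: h1; rewrite eq_sym oppr_eq0 (negbTE two_neq0). Qed.
Lemma ns21 : ~ csubset Z2 Z1.
Proof. move=> h; have /Z1E [h1 _] := h _ in2; rewrite mkpt0 in h1.
by move/eqP: h1; rewrite (negbTE one_neq0). Qed.
Lemma ns23 : ~ csubset Z2 Z3.
Proof. move=> h; have /Z3E [h1 _] := h _ in2; rewrite mkpt1 in h1.
exact: two_neq_m2. Qed.
Lemma ns31 : ~ csubset Z3 Z1.
Proof. move=> h; have /Z1E [h1 _] := h _ in3; rewrite mkpt0 in h1.
by move/eqP: h1; rewrite (negbTE one_neq0). Qed.
Lemma ns32 : ~ csubset Z3 Z2.
Proof. move=> h; have /Z2E [h1 _] := h _ in3; rewrite mkpt1 in h1.
by apply: two_neq_m2. Qed.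

Lemma comp1 : irr_component XK Z1.
Proof.
split; [exact: Z1_irr | exact: Z1_XK |].
move=> W hW h1W hWX.
case: (irr3 hW (fun x hx => XK_sub (hWX x hx))) => // h.
- by case: ns12 => x /h1W /h.
- by case: ns13 => x /h1W /h.
Qed.
Lemma comp2 : irr_component XK Z2.
Proof.
split; [exact: Z2_irr | exact: Z2_XK |].
move=> W hW h1W hWX.
case: (irr3 hW (fun x hx => XK_sub (hWX x hx))) => // h.
- by case: ns21 => x /h1W /h.
- by case: ns23 => x /h1W /h.
Qed.
Lemma comp3 : irr_component XK Z3.
Proof.
split; [exact: Z3_irr | exact: Z3_XK |].
move=> W hW h1W hWX.
case: (irr3 hW (fun x hx => XK_sub (hWX x hx))) => // h.
- by case: ns31 => x /h1W /h.
- by case: ns32 => x /h1W /h.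
Qed.

Lemma comp_all Z : irr_component XK Z -> [\/ csame Z Z1, csame Z Z2 | csame Z Z3].
Proof.
case=> hZ hZX hmax.
case: (irr3 hZ (fun x hx => XK_sub (hZX x hx))) => h.
- by constructor 1; split => //; apply: hmax => //; [exact: Z1_irr|exact: Z1_XK].
- by constructor 2; split => //; apply: hmax => //; [exact: Z2_irr|exact: Z2_XK].
- by constructor 3; split => //; apply: hmax => //; [exact: Z3_irr|exact: Z3_XK].
Qed.

Lemma cv (v : 'cV[C]_2) : v != 0 -> v 0 0 != 0 \/ v 1 0 != 0.
Proof.
move=> nz; apply: NNPP => hn; move/negP: nz; apply; apply/eqP.
apply/matrixP; apply: ordP2 => j; rewrite (ord1 j) mxE; apply/eqP; apply: NNPP => h;
  apply: hn; [left|right]; exact/negP.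
Qed.

Lemma irr_ex : contains_irr_char Z1.
Proof.
exists (mk2 iC 0 0 (- iC)), (mk2 0 (-1) 1 0); split.
- apply: klein_mk.
  + rewrite /SL2 det2; mkE.
    have -> : (1 : C) = - (iC * iC) by rewrite iCsq opprK.
    ring.
  + rewrite /SL2 det2; mkE; ring.
  + mx2; rewrite !mul2E; mkE; ring.
- case=> v [nz [l [m [hA hB]]]].
  have eA0 := congr1 (fun M : 'M[C]_(2,1) => M 0 0) hA; have eA1 := congr1 (fun M : 'M[C]_(2,1) => M 1 0) hA.
  have eB0 := congr1 (fun M : 'M[C]_(2,1) => M 0 0) hB; have eB1 := congr1 (fun M : 'M[C]_(2,1) => M 1 0) hB.
  rewrite /= !mul2E ?m00 ?m01 ?m10 ?m11 in eA0 eA1 eB0 eB1.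
  rewrite !mxE in eA0 eA1 eB0 eB1.
  have e01 : v 0 0 * v 1 0 = 0.
    have : 2 * iC * (v 0 0 * v 1 0) = 0.
      transitivity ((iC * v 0 0 + 0 * v 1 0) * v 1 0 - v 0 0 * (0 * v 0 0 + - iC * v 1 0));
        first by ring.
      rewrite eA0 eA1; ring.
    by move/eqP; rewrite mulf_eq0 [2 * iC == 0]mulf_eq0 (negbTE two_neq0) (negbTE iC_neq0) /= => /eqP.
  move/eqP: e01; rewrite mulf_eq0 => /orP [/eqP h0|/eqP h1].
  + have : v 1 0 = 0.
      apply: oppr_inj; rewrite oppr0; transitivity (0 * v 0 0 + -1 * v 1 0); first by ring.
      by rewrite eB0 h0 mulr0.
    move=> h1; case: (cv nz); by rewrite ?h0 ?h1 eqxx.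
  + have : v 0 0 = 0.
      transitivity (1 * v 0 0 + 0 * v 1 0); first by ring.
      by rewrite eB1 h1 mulr0.
    move=> h0; case: (cv nz); by rewrite ?h0 ?h1 eqxx.
- apply/Z1E; rewrite cp0 cp2 !tr2 !mul2E; mkE; split; ring.
Qed.

Lemma no_irr2 : ~ contains_irr_char Z2.
Proof.
case=> A [B [hk hirr /Z2E [h1 _]]].
rewrite cp1 in h1.
apply: (reducible_tr (mu := 1) hk) => //; first by rewrite h1 mulr1.
by rewrite mulr1.
Qed.
Lemma no_irr3 : ~ contains_irr_char Z3.
Proof.
case=> A [B [hk hirr /Z3E [h1 _]]].
rewrite cp1 in h1.
apply: (reducible_tr (mu := -1) hk) => //; first by rewrite h1 mulrN1.
by rewrite mulrNN mulr1.
Qed.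

Lemma Z1_phi x : Z1 x -> x = phi (mkpt 0 0 0) (mkpt 0 1 0) (x 1).
Proof.
move/Z1E => [h0 h2]; apply: pt_ext; rewrite /phi ?mkpt0 ?mkpt1 ?mkpt2 ?h0 ?h2; ring.
Qed.

Lemma sing_ind n : forall (q : {poly C}) (W : cset), (size q <= n)%N -> q != 0 ->
  zirreducible W -> csubset W Z1 -> (forall x, W x -> q.[x 1] = 0) ->
  forall a b, W a -> W b -> a = b.
Proof.
elim: n => [|n IH] q W hs nq hW hWZ hq a b Wa Wb.
  by move: nq; rewrite -size_poly_eq0; move: hs; rewrite leqn0 => /eqP ->.
have /factor_theorem [q1 eq] : root q (a 1) by apply/rootP; apply: hq.
have nq1 : q1 != 0 by apply/eqP => e; move: nq; rewrite eq e mul0r eqxx.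
have hs1 : (size q1 <= n)%N.
  move: hs; rewrite eq size_mul ?polyXsubC_eq0 // size_XsubC addn2 /=.
  by [].
have [G hG] := univ q1.
have [_ _ hirr] := hW.
have hsub : csubset W (fun x => pointset a x \/ zero_locus (fun g => g = G) x).
  move=> x Wx; have := hq x Wx; rewrite eq hornerM hornerXsubC => /eqP.
  rewrite mulf_eq0 => /orP [/eqP h|/eqP h].
  - by right => g ->; rewrite hG.
  - left; move: h => /eqP; rewrite subr_eq0 => /eqP h.
    by rewrite (Z1_phi (hWZ x Wx)) (Z1_phi (hWZ a Wa)) h.
case: (hirr _ _ (point_closed a) (zl_closed _) hsub) => h.
- by rewrite (h b Wb).
- apply: (IH q1 W hs1 nq1 hW hWZ) => // x Wx.
  by rewrite -hG; apply: (h x Wx).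
Qed.

Lemma proper_sing W z : zirreducible W -> csubset W Z1 -> Z1 z -> ~ W z ->
  forall a b, W a -> W b -> a = b.
Proof.
move=> hW hWZ Zz nWz.
have [[P [h1 h2]] _ _] := hW.
have [p [hp nzp]] : exists p, P p /\ p.@[z] != 0.
  by apply: zl_not => h; apply: nWz; apply: h2.
have [q hq] := restr (mkpt 0 0 0) (mkpt 0 1 0) p.
have nq : q != 0.
  by apply/eqP => e; move: nzp; rewrite (Z1_phi Zz) hq e horner0 eqxx.
apply: (sing_ind (leqnn (size q)) nq hW hWZ) => x Wx.
by rewrite -hq -(Z1_phi (hWZ x Wx)); apply: (h1 x Wx).
Qed.

Lemma dim1 : zdim_eq Z1 1.
Proof.
split.
- exists (fun n => if n is 0%N then pointset (mkpt 0 0 0) else Z1); split.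
  + case=> [|[|//]] _ /=.
    * by split; [exact: point_irr | move=> x ->; exact: in1].
    * by split; [exact: Z1_irr | ].
  + case=> [|//] _ /=; split; first by move=> x ->; exact: in1.
    move=> h; have /Z1E hz : Z1 (mkpt 0 1 0) by apply/Z1E.
    have := h _ (proj2 (Z1E _) hz) => /(congr1 (fun x : pt => x 1)).
    rewrite !mkpt1 => /eqP; by rewrite (negbTE one_neq0).
- case=> f [hf1 hf2].
  have [i0 s0] := hf1 0%N isT; have [i1 s1] := hf1 1%N isT; have [i2 s2] := hf1 2%N isT.
  have [s01 n10] := hf2 0%N isT; have [s12 n21] := hf2 1%N isT.
  have [z [fz nz]] : exists z, f 2%N z /\ ~ f 1%N z.
    by apply: NNPP => hh; apply: n21 => x fx; apply: NNPP => nx; apply: hh; exists x.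
  have [v [fv nv]] : exists v, f 1%N v /\ ~ f 0%N v.
    by apply: NNPP => hh; apply: n10 => x fx; apply: NNPP => nx; apply: hh; exists x.
  have [_ [u fu] _] := i0.
  have e := proper_sing i1 s1 (s2 z fz) nz (s01 u fu) fv.
  by apply: nv; rewrite -e.
Qed.

Theorem corollary4p2 :
  exists Z1 Z2 Z3 : cset,
    [/\ irr_component XK Z1, irr_component XK Z2 & irr_component XK Z3]
    /\ [/\ ~ csame Z1 Z2, ~ csame Z1 Z3 & ~ csame Z2 Z3]
    /\ (forall Z, irr_component XK Z ->
          [\/ csame Z Z1, csame Z Z2 | csame Z Z3])
    /\ [/\ contains_irr_char Z1, ~ contains_irr_char Z2,
           ~ contains_irr_char Z3 & zdim_eq Z1 1].
Proof.
exists Z1, Z2, Z3; split; first by split; [exact: comp1|exact: comp2|exact: comp3].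
split; first by split; case=> h _; [exact: ns12 h|exact: ns13 h|exact: ns23 h].
split; first exact: comp_all.
split; [exact: irr_ex|exact: no_irr2|exact: no_irr3|exact: dim1].
Qed.
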